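(* Let $n\ge2$, $P_{n-1}(\lambda)=\mu_1\cdots\mu_n$ with $\mu_i=\sum_{j\neq i}\lambda_j$, $\mathcal P_{n-1}=\{\lambda\in\mathbb R^n:\mu_i>0\ \forall i\}$, and $f(\lambda)=\log P_{n-1}(\lambda)$ on $\mathcal P_{n-1}$. Let $\lambda,\underline\lambda\in\mathcal P_{n-1}$, write $\underline\mu_i=\sum_{j\ne i}\underline\lambda_j$, and let $\varepsilon>0$ with $\min_i\underline\mu_i\ge\varepsilon$. Suppose $\min_j\mu_j\le\frac{\varepsilon}{2n}$. Then $$\sum_{i=1}^n\frac1{\mu_i}\ge\frac{2n}{\varepsilon},\qquad \sum_{i=1}^nf_i(\lambda)(\underline\lambda_i-\lambda_i)\ge\frac{\varepsilon}{2}\sum_{i=1}^n\frac1{\mu_i}=\frac{\varepsilon}{2(n-1)}\sum_{i=1}^nf_i(\lambda),$$ where $f_i=\partial f/\partial\lambda_i$. *)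

(* Defs.v *)
From HB Require Import structures.
From mathcomp Require Import all_boot all_order all_algebra.
From mathcomp Require Import all_classical all_reals all_analysis.
Set Implicit Arguments. Unset Strict Implicit. Unset Printing Implicit Defensive.
Import Order.TTheory GRing.Theory Num.Theory.
Import numFieldNormedType.Exports.
Local Open Scope ring_scope.

(* A point lambda of R^n is a row vector 'rV[R]_n; lambda_j = l ord0 j. *)

Definition mu {R : realType} {n : nat} (l : 'rV[R]_n) (i : 'I_n) : R :=
  \sum_(j < n | j != i) l ord0 j.

Definition Pn1 {R : realType} {n : nat} (l : 'rV[R]_n) : R :=
  \prod_(i < n) mu l i.

Definition in_cone {R : realType} {n : nat} (l : 'rV[R]_n) : Prop :=
  forall i : 'I_n, 0 < mu l i.

Definition f {R : realType} {n : nat} (l : 'rV[R]_n) : R := ln (Pn1 l).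

Definition fpart {R : realType} {n : nat} (i : 'I_n) (l : 'rV[R]_n) : R :=
  'D_(delta_mx 0 i) f l.

(* Main.v *)
Require Import Defs.
From HB Require Import structures.
From mathcomp Require Import all_boot all_order all_algebra.
From mathcomp Require Import all_classical all_reals all_analysis.
From mathcomp Require Import ring lra.
Import Order.TTheory GRing.Theory Num.Theory.
Import numFieldNormedType.Exports.
Local Open Scope ring_scope.

Lemma mu_shift (R : realType) n (l : 'rV[R]_n) i k (h : R) :
  mu (h *: delta_mx 0 i + l) k = mu l k + h * (k != i)%:R.
Proof.
rewrite /mu.
under eq_bigr => j _ do rewrite !mxE.
rewrite big_split /= addrC; congr (_ + _).
rewrite -mulr_sumr; congr (_ * _).
have [->|ki] := eqVneq k i.
  by rewrite big1 // => j ji; rewrite (negbTE ji).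
rewrite (bigD1 i) /=; last by rewrite eq_sym.
rewrite eqxx big1 ?addr0 // => j /andP[_ ji].
by rewrite (negbTE ji).
Qed.

Lemma ln_prod (R : realType) (I : Type) (r : seq I) (F : I -> R) :
  (forall k, 0 < F k) -> ln (\prod_(k <- r) F k) = \sum_(k <- r) ln (F k).
Proof.
move=> Fp.
suff : 0 < \prod_(k <- r) F k /\ ln (\prod_(k <- r) F k) = \sum_(k <- r) ln (F k) by case.
elim: r => [|a r [Pp IH]]; first by rewrite !big_nil ln1.
rewrite !big_cons; split; first exact: mulr_gt0.
by rewrite lnM ?posrE // IH.
Qed.

Lemma fpartE (R : realType) n (l : 'rV[R]_n) (hl : in_cone l) i :
  fpart i l = \sum_(k < n) (mu l k)^-1 * (k != i)%:R.
Proof.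
rewrite /fpart.
set v := delta_mx 0 i.
have -> : 'D_v f l = 'D_1 (fun h : R => f (h *: v + l)) 0.
  rewrite /derive.
  suff -> : (fun h : R => h^-1 *: ((f \o shift l) (h *: v) - f l)) =
    (fun h : R => h^-1 *: (((fun h0 : R => f (h0 *: v + l)) \o shift 0) (h *: (1:R)) - f (0 *: v + l))) by [].
  apply/funext => h /=.
  rewrite /shift /= addr0 scale0r add0r; congr (_ *: (f (_ *: _ + _) - _)).
  by rewrite -[RHS]/(h * 1) mulr1.
set G := \sum_(k < n) (fun h : R => ln (mu l k + h * (k != i)%:R)).
have nearG : \forall h \near (0:R), f (h *: v + l) = G h.
  have : \forall h \near (0:R), forall k, 0 < mu l k + h * (k != i)%:R.
    apply: (@filter_forall R _ (fun k h => 0 < mu l k + h * (k != i)%:R) (nbhs (0:R)) _) => k.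
    apply: filterS (nbhs0_lt (hl k)) => h /= hk.
    have : - h <= `|h| by rewrite -normrN ler_norm.
    have := hl k.
    case: (k != i) => /=; rewrite ?mulr1 ?mulr0 ?addr0 //; lra.
  apply: filterS => h hpos.
  rewrite /G fct_sumE /f /Pn1.
  under eq_bigr => k _ do rewrite mu_shift.
  by rewrite ln_prod.
rewrite (near_eq_derive _ nearG).
apply: derive_val.
rewrite /G.
apply: is_derive_sum => k.
set c : R := (k != i)%:R.
have Hg : is_derive (0:R) 1 (fun h : R => mu l k + h * c) c.
  have H := (is_deriveD (is_derive_cst (mu l k) (0:R) 1) (is_deriveM (is_derive_id (0:R) 1) (is_derive_cst c (0:R) 1))).
  apply: is_derive_eq H _.
  by rewrite scaler0 !add0r -[RHS]mulr1.
have Hln : is_derive (mu l k + 0 * c) 1 (@ln R) (mu l k)^-1.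
  by rewrite mul0r addr0; exact: is_derive1_ln.
exact: (@is_derive1_comp R (@ln R) (fun h : R => mu l k + h * c) 0 _ _ Hln Hg).
Qed.

Lemma sum_neq (R : realType) n (F : 'I_n -> R) k :
  \sum_i (k != i)%:R * F i = \sum_(i | i != k) F i.
Proof.
rewrite [RHS]big_mkcond; apply: eq_bigr => i _.
by rewrite eq_sym; case: (i != k) => /=; rewrite ?mul1r ?mul0r.
Qed.

Lemma sum_neq1 (R : realType) n (k : 'I_n) :
  \sum_i (k != i)%:R = n%:R - 1 :> R.
Proof.
have -> : \sum_i (k != i)%:R = \sum_(i < n) (1 - (k == i)%:R) :> R.
  apply: eq_bigr => i _; case: (k == i) => /=; by rewrite ?subrr ?subr0.
rewrite sumrB sumr_const card_ord; congr (_ - _).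
rewrite (bigD1 k) //= eqxx big1 ?addr0 // => j jk.
by rewrite eq_sym (negbTE jk).
Qed.

Theorem lemma3p1 (R : realType) (n : nat) (hn : (2 <= n)%N)
  (l ul : 'rV[R]_n) (eps : R)
  (hl : in_cone l) (hul : in_cone ul) (heps : 0 < eps)
  (hmin_ul : forall i : 'I_n, eps <= mu ul i)
  (hmin_l : exists j : 'I_n, mu l j <= eps / (2 * n%:R)) :
  [/\ 2 * n%:R / eps <= \sum_(i < n) (mu l i)^-1,
      \sum_(i < n) fpart i l * (ul ord0 i - l ord0 i)
        >= eps / 2 * \sum_(i < n) (mu l i)^-1
    & eps / 2 * \sum_(i < n) (mu l i)^-1
        = eps / (2 * (n%:R - 1)) * \sum_(i < n) fpart i l ].
Proof.
set S := \sum_(i < n) (mu l i)^-1.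
have n2 : 2 <= n%:R :> R by rewrite (ler_nat R 2 n).
have h1 : 2 * n%:R / eps <= S.
  case: hmin_l => j hj.
  rewrite /S (bigD1 j) //=.
  apply: le_trans (_ : (mu l j)^-1 <= _); last first.
    by rewrite lerDl sumr_ge0 // => i _; rewrite invr_ge0 ltW.
  rewrite -invf_div lef_pV2 ?posrE //.
  by apply: divr_gt0 => //; lra.
split => //.
- rewrite (eq_bigr (fun i => \sum_k (mu l k)^-1 * ((k != i)%:R * (ul ord0 i - l ord0 i)))); last first.
    by move=> i _; rewrite fpartE // mulr_suml; apply: eq_bigr => k _; rewrite mulrA.
  rewrite exchange_big /=.
  rewrite (eq_bigr (fun k => (mu l k)^-1 * (mu ul k - mu l k))); last first.
    by move=> k _; rewrite -mulr_sumr sum_neq sumrB.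
  apply: le_trans (_ : \sum_k (eps * (mu l k)^-1 - 1) <= _); last first.
    apply: ler_sum => k _.
    by rewrite mulrBr mulVf ?gt_eqF // lerD2r mulrC ler_pM2l ?invr_gt0.
  rewrite big_split /= sumrN sumr_const card_ord -mulr_sumr -/S.
  have : 2 * n%:R <= eps * S.
    by rewrite -ler_pdivrMl // mulrC.
  lra.
- rewrite (eq_bigr (fun i => \sum_k (mu l k)^-1 * (k != i)%:R)); last first.
    by move=> i _; rewrite fpartE.
  rewrite exchange_big /=.
  rewrite (eq_bigr (fun k => (mu l k)^-1 * (n%:R - 1))); last first.
    by move=> k _; rewrite -mulr_sumr sum_neq1.
  rewrite -mulr_suml -/S.
  field.
  lra.
Qed.
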